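(* Let $t,r$ be positive integers and let $b$ be a positive integer having property $\mathcal{P}$ with respect to $2^r t$. Then $x^{2^r t}+b^{2^r}$ is reducible over $\mathbb{Z}$ if and only if $t$ is even, $r=1$, and $b=2d^2$ for some positive integer $d$.
   Context: For a positive integer $N$, a positive integer $b$ has property $\mathcal{P}$ with respect to $N$ if either $b$ is a prime number, or $b=(p_1^{b_1}p_2^{b_2}\cdots p_k^{b_k})^d$ where $k\ge 2$, $p_1,\dots,p_k$ are distinct primes, $b_1,\dots,b_k\ge 1$, $\gcd(b_1,\ldots,b_k)=1$, and $d$ is a positive integer with $\gcd(d,N)=1$. A monic polynomial in $\mathbb{Z}[x]$ of degree $\ge 1$ is reducible over $\mathbb{Z}$ if it is a product of two polynomials in $\mathbb{Z}[x]$ of degree at least $1$. *)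

(* Defs.v *)
From mathcomp Require Import all_boot all_order all_algebra.
Set Implicit Arguments. Unset Strict Implicit. Unset Printing Implicit Defensive.
Import GRing.Theory Num.Theory.

Definition propP (N b : nat) : Prop :=
  prime b \/
  exists (ps es : seq nat) (d : nat),
    2 <= size ps /\ size es = size ps /\ uniq ps /\ all prime ps /\
    all (fun e => 0 < e) es /\ foldr gcdn 0 es = 1 /\
    0 < d /\ coprime d N /\
    b = (\prod_(i < size ps) (nth 0 ps i) ^ (nth 0 es i)) ^ d.

Definition reducible_Z (f : {poly int}) : Prop :=
  exists p q : {poly int}, [/\ (1 < size p)%N, (1 < size q)%N & f = (p * q)%R].

(* Main.v *)
Require Import Defs.
From HB Require Import structures.
From mathcomp Require Import all_boot all_order all_algebra all_field.
From mathcomp Require Import complex.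
From mathcomp Require Import lra ring zify.
From Stdlib Require Import Classical.
Set Implicit Arguments. Unset Strict Implicit. Unset Printing Implicit Defensive.
Import GRing.Theory Num.Theory.

Lemma logn_prod_ord (p n : nat) (F : nat -> nat) : (forall j, j < n -> 0 < F j)%N ->
  logn p (\prod_(j < n) F j) = (\sum_(j < n) logn p (F j))%N.
Proof.
elim: n => [|n IH] hF; first by rewrite !big_ord0 logn1.
rewrite !big_ord_recr /= lognM ?IH //.
- by move=> j jn; apply: hF; rewrite ltnS ltnW.
- by rewrite prodn_gt0 // => i; apply: hF; rewrite ltnS ltnW.
- by apply: hF.
Qed.

Lemma logn_prodP (ps es : seq nat) i : uniq ps -> all prime ps -> (i < size ps)%N ->
  logn (nth 0 ps i) (\prod_(j < size ps) nth 0 ps j ^ nth 0 es j) = nth 0 es i.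
Proof.
move=> ups pps isz.
have pr : forall j, (j < size ps)%N -> prime (nth 0 ps j).
  by move=> j jn; apply: (allP pps); rewrite mem_nth.
rewrite (@logn_prod_ord _ _ (fun j => nth 0 ps j ^ nth 0 es j)); last by move=> j jn; rewrite expn_gt0 prime_gt0 ?orbT // pr.
under eq_bigr do rewrite lognX logn_prime ?pr //.
rewrite (bigD1 (Ordinal isz)) //= eqxx muln1 big1 ?addn0 // => j /eqP hj.
rewrite (_ : (_ == _) = false) ?muln0 //; apply/negbTE; rewrite nth_uniq //.
by apply/eqP => e; apply: hj; apply: val_inj.
Qed.

Lemma dvdn_foldr_gcd (u k : nat) (es : seq nat) :
  (forall e, e \in es -> u %| k * e)%N -> (u %| k * foldr gcdn 0 es)%N.
Proof.
elim: es => [|e es IH] H /=; first by rewrite muln0 dvdn0.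
rewrite muln_gcdr dvdn_gcd H ?mem_head // IH // => x xs.
by apply: H; rewrite in_cons xs orbT.
Qed.

Lemma NT1 (N b c u E m : nat) : (0 < b)%N -> (0 < u)%N -> propP N b -> (u %| N)%N ->
  coprime u E -> (c ^ u = b ^ (E * m))%N -> (u %| m)%N.
Proof.
move=> b0 u0 hP uN cuE hc.
have hl : forall p, (logn p c * u = E * m * logn p b)%N.
  by move=> p; rewrite mulnC -lognX hc lognX.
case: hP => [bp|[ps [es [d [sps [ses [ups [pps [pes [ges [d0 [cdN bE]]]]]]]]]]]].
  have := hl b; rewrite [logn b b]logn_prime // eqxx muln1 => e.
  by rewrite -(Gauss_dvdr _ cuE) -e dvdn_mull.
have cdu : coprime d u by apply: coprime_dvdr uN cdN.
rewrite -(Gauss_dvdl _ (_ : coprime u d)) ?(coprime_sym u d) //.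
have -> : (m * d = m * d * foldr gcdn 0 es)%N by rewrite ges muln1.
apply: dvdn_foldr_gcd => e ein.
set i := index e es.
have ies : (i < size ps)%N by rewrite -ses index_mem.
have := hl (nth 0 ps i); rewrite bE lognX logn_prodP // nth_index // => h.
  rewrite -(Gauss_dvdr _ cuE) (_ : (E * (m * d * e) = logn (nth 0 ps i) c * u)%N).
    exact: dvdn_mull.
  by rewrite h mulnA mulnA mulnA.
Qed.

Local Open Scope ring_scope.
Lemma rat_pow_int (q : rat) (n : nat) (z : int) : (0 < n)%N -> (q ^+ n = z%:~R)%R ->
  q = ((numq q)%:~R)%R.
Proof.
move=> n0 hq.
have hn : (numq q) ^+ n = z * (denq q) ^+ n.
  apply: (@intr_inj rat); rewrite rmorphXn /= numqE exprMn hq rmorphM rmorphXn //.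
have hn' : (`|numq q| ^ n = `|z| * `|denq q| ^ n)%N.
  by rewrite -!abszX -abszM hn.
have cop : coprime (`|numq q| ^ n) (`|denq q| ^ n).
  by rewrite coprimeXl // coprimeXr // coprime_num_den.
have d1 : (`|denq q| ^ n = 1)%N.
  apply/eqP; rewrite -dvdn1 -(eqnP cop) dvdn_gcd dvdnn andbT hn' dvdn_mull //.
have : `|denq q|%N = 1%N.
  by apply/eqP; rewrite -(eqn_exp2r _ _ n0) exp1n d1.
move/(congr1 (fun k : nat => k%:Z)); rewrite absz_denq => hd.
by rewrite numqE hd mulr1.
Qed.



Section Step.
Variable K : fieldType.
Hypothesis two_neq0 : (2 : K) != 0.

Lemma coef_compN (p : {poly K}) i : (p \Po (- 'X))`_i = (-1) ^+ i * p`_i.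
Proof.
elim/poly_ind: p i => [|q c IH] i; first by rewrite comp_poly0 !coef0 mulr0.
rewrite comp_poly_MXaddC mulrN coefD coefN coefMX !coefD coefMX !coefC.
case: i => [|j] /=; first by rewrite oppr0 add0r mul1r.
by rewrite !addr0 IH exprS mulN1r mulNr.
Qed.

Lemma size_X2 : size ('X^2 : {poly K}) = 3%N.
Proof. by rewrite size_polyXn. Qed.

Lemma size_NX : size (- 'X : {poly K}) = 2%N.
Proof. by rewrite size_opp size_polyX. Qed.

Lemma size_compN (p : {poly K}) : size (p \Po (- 'X)) = size p.
Proof. by rewrite size_comp_poly2 // size_NX. Qed.

Lemma size_compX2 (p : {poly K}) : p != 0 -> size (p \Po 'X^2) = ((size p).-1 * 2).+1.
Proof.
move=> p0; have := size_comp_poly p 'X^2; rewrite size_X2 /= => <-.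
rewrite prednK // lt0n size_poly_eq0 comp_poly_eq0 ?size_X2 //.
Qed.

Lemma compNN (p : {poly K}) : p \Po (- 'X) \Po (- 'X) = p.
Proof. by rewrite -comp_polyA raddfN /= comp_polyX opprK comp_polyXr. Qed.

Lemma compX2N (p : {poly K}) : p \Po 'X^2 \Po (- 'X) = p \Po 'X^2.
Proof. by rewrite -comp_polyA comp_Xn_poly sqrrN. Qed.

Lemma two_mul_eq0 (c : K) : c = - c -> c = 0.
Proof.
move=> h; have : 2 * c = 0 by rewrite mulr2n mulrDl mul1r {1}h addNr.
by move/eqP; rewrite mulf_eq0 (negPf two_neq0) /= => /eqP.
Qed.

Lemma even_compX2 (p : {poly K}) : p \Po (- 'X) = p -> p = even_poly p \Po 'X^2.
Proof.
move=> hp; have ho : odd_poly p = 0.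
  apply/polyP => i; rewrite coef_odd_poly coef0; apply: two_mul_eq0.
  have h := congr1 (fun q : {poly K} => q`_(i.*2.+1)) hp.
  have e : (-1 : K) ^+ i.*2 = 1 by rewrite -muln2 exprM sqrr_sign.
  rewrite /= coef_compN exprS e mulr1 mulN1r in h.
  by rewrite -{1}h.
by rewrite -{1}(poly_even_odd p) ho comp_poly0 mul0r addr0.
Qed.

Lemma compX2_inj (p q : {poly K}) : p \Po 'X^2 = q \Po 'X^2 -> p = q.
Proof.
move=> h; apply/polyP => i; have := congr1 (fun r : {poly K} => r`_(i * 2)%N) h.
by rewrite /= !coef_comp_poly_Xn // dvdn_mull // mulnK.
Qed.

Lemma compX2_dvd (G F : {poly K}) : G \Po 'X^2 %| F \Po 'X^2 -> G %| F.
Proof.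
have [->|G0] := eqVneq G 0.
  by rewrite comp_poly0 dvd0p comp_poly_eq0 ?size_X2 // dvd0p.
case/dvdpP => Q hQ.
have GX0 : G \Po 'X^2 != 0 by rewrite comp_poly_eq0 ?size_X2.
have QE : Q \Po (- 'X) = Q.
  apply: (mulIf GX0); rewrite -{1}(compX2N G) -comp_polyM -hQ compX2N //.
have -> : F = even_poly Q * G.
  by apply: compX2_inj; rewrite comp_polyM -even_compX2.
exact: dvdp_mull.
Qed.


Lemma irr_scale (p : {poly K}) c : c != 0 -> irreducible_poly p -> irreducible_poly (c *: p).
Proof.
move=> c0 [p1 hp]; split; first by rewrite size_scale.
move=> d d1; rewrite dvdpZr // => dp; apply: (eqp_trans (hp d d1 dp)).
by rewrite eqp_sym eqp_scale.
Qed.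

Lemma irr_factor (P q : {poly K}) : P != 0 -> q %| P -> size q != 1%N -> ~~ (q %= P) ->
  exists h, [/\ irreducible_poly h, h \is monic, h %| P & (size h < size P)%N].
Proof.
move=> P0; have [n] := ubnP (size q); elim: n q => [|n IH] q; first by rewrite ltn0.
move=> szq qP q1 qnP.
have q0 : q != 0 by apply/eqP => q0; move: qP; rewrite q0 dvd0p (negPf P0).
have sqP : (size q < size P)%N.
  rewrite ltn_neqAle dvdp_leq // andbT; by rewrite dvdp_size_eqp.
have sq1 : (1 < size q)%N.
  by move: q1 q0; rewrite -size_poly_eq0; case: (size q) => [|[]].
have lc0 : lead_coef q != 0 by rewrite lead_coef_eq0.
case: (classic (irreducible_poly q)) => [qirr|qnirr].
  exists ((lead_coef q)^-1 *: q); split.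
  - by apply: irr_scale; rewrite // invr_eq0.
  - by apply/monicP; rewrite lead_coefZ mulVf.
  - by rewrite dvdpZl // invr_eq0.
  - by rewrite size_scale // invr_eq0.
have : ~ (forall d : {poly K}, size d != 1%N -> d %| q -> d %= q).
  by move=> H; apply: qnirr; split.
move/not_all_ex_not => [d] Hd.
have [d1 Hd2] := imply_to_and _ _ Hd.
have [dq dnq] := imply_to_and _ _ Hd2.
have sdq : (size d < size q)%N.
  rewrite ltn_neqAle dvdp_leq // andbT dvdp_size_eqp //; exact/negP.
apply: (IH d) => //.
- exact: leq_trans sdq _.
- exact: dvdp_trans dq qP.
- apply/negP => /eqp_size sdP; move: sdq; rewrite sdP => /(ltn_trans sqP).
  by rewrite ltnn.
Qed.

Lemma sign_sq (m : nat) : (-1 : K) ^+ m * (-1) ^+ m = 1.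
Proof. by rewrite -expr2 sqrr_sign. Qed.

Lemma step_irr (F : {poly K}) : F \is monic -> irreducible_poly F -> F.[0] != 0 ->
  (forall c : K, c ^+ 2 != (-1) ^+ (size F).-1 * F.[0]) ->
  irreducible_poly (F \Po 'X^2).
Proof.
move=> Fmon Firr F00 Hsq.
have F0 : F != 0 by apply: irredp_neq0.
have sF : (1 < size F)%N by case: Firr.
set N := (size F).-1.
have N1 : (0 < N)%N by rewrite /N -ltnS prednK // ltnW.
set P := F \Po 'X^2.
have P0 : P != 0 by rewrite comp_poly_eq0 ?size_X2.
have sP : size P = (N * 2).+1 by rewrite size_compX2.
have Pmon : P \is monic.
  by apply/monicP; rewrite lead_coef_comp ?size_X2 // (monicP Fmon) lead_coefXn expr1n mulr1.
have P_0 : P.[0] = F.[0] by rewrite horner_comp hornerXn expr0n.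
split; first by rewrite sP ltnS muln_gt0 N1.
move=> q q1 qP; apply/negPn/negP => qnP.
have [h [hirr hmon hP hsz]] := irr_factor P0 qP q1 qnP.
have h0 : h != 0 by apply: irredp_neq0.
have sh : (1 < size h)%N by case: hirr.
set m := (size h).-1.
have m1 : (0 < m)%N by rewrite /m -ltnS prednK // ltnW.
have shm : size h = m.+1 by rewrite /m prednK // ltnW.
set hN := (-1) ^+ m *: (h \Po - 'X).
have s0 : (-1 : K) ^+ m != 0 by rewrite signr_eq0.
have hNP : hN %| P by rewrite dvdpZl // /P -compX2N dvdp_comp_poly.
have shN : size hN = size h by rewrite size_scale // size_compN.
have hNmon : hN \is monic.
  apply/monicP; rewrite lead_coefZ lead_coef_comp ?size_NX // (monicP hmon) mul1r.
  by rewrite lead_coefN lead_coefX -/m sign_sq.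
have hNN : hN \Po - 'X = (-1) ^+ m *: h by rewrite linearZ /= compNN.
have hN_0 : hN.[0] = (-1) ^+ m * h.[0].
  by rewrite hornerZ horner_comp hornerN hornerX oppr0.
have hF : forall G, G \Po 'X^2 %| P -> G %= 1 \/ G %= F.
  by move=> G /compX2_dvd GF; case: (irredp_XsubCP Firr GF) => H; [left|right].
have := irreducible_poly_coprime hN hirr.
case: (boolP (h %| hN)) => [hhN _|_ cop].
  have ehN : h = hN by apply/eqP; rewrite -eqp_monic // -dvdp_size_eqp // shN.
  have hc : h \Po - 'X = (-1) ^+ m *: h.
    by rewrite {2}ehN /hN scalerA sign_sq scale1r.
  case: (boolP (odd m)) => om.
    have hz : h`_0 = 0.
      apply: two_mul_eq0; have := congr1 (fun r : {poly K} => r`_0) hc.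
      have E : (-1 : K) ^+ m = -1 by rewrite -signr_odd om expr1.
      by rewrite /= coef_compN coefZ E expr0 mul1r mulN1r.
    have : root P 0 by apply: root_dvdp hP _; rewrite /root horner_coef0 hz.
    by rewrite /root P_0 (negPf F00).
  have hev : h \Po - 'X = h by rewrite hc -signr_odd (negPf om) expr0 scale1r.
  have hE := even_compX2 hev.
  have G0 : even_poly h != 0 by apply: contraNneq h0 => e; rewrite hE e comp_poly0.
  case: (hF (even_poly h)); rewrite -?hE //.
    move/eqp_size; rewrite size_poly1 => sG.
    by move: shm; rewrite hE size_compX2 // sG /= => -[] E; move: m1; rewrite -E.
  move/eqp_size => sG; move: hsz; rewrite sP {1}hE size_compX2 // sG -/N.
  by rewrite ltnn.
set H := h * hN.
have HP : H %| P by rewrite Gauss_dvdp // hP hNP.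
have HN : H \Po - 'X = H.
  by rewrite comp_polyM hNN -scalerAr scalerAl mulrC.
have HE := even_compX2 HN.
have H0 : H != 0 by rewrite mulf_neq0 // -size_poly_eq0 shN -lt0n ltnW.
have G0 : even_poly H != 0 by apply: contraNneq H0 => e; rewrite HE e comp_poly0.
have sH : size H = (m * 2).+1.
  by rewrite size_mul // ?shN ?shm -?size_poly_eq0 ?shN ?shm // addSn addnS muln2 addnn.
case: (hF (even_poly H)); rewrite -?HE //.
  move/eqp_size; rewrite size_poly1 => sG.
  move: sH; rewrite HE size_compX2 // sG /= => -[] E; move: m1; rewrite lt0n -(eqn_pmul2r (isT : (0 < 2)%N)) -E eqxx; by [].
move/eqp_size => sG.
have sHP : size H = size P by rewrite HE size_compX2 // sG -/N sP.
have EHP : H = P.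
  by apply/eqP; rewrite -eqp_monic // ?monicMl // -dvdp_size_eqp // sHP.
have emN : m = N by apply/eqP; move: sHP; rewrite sH sP => -[] /eqP; rewrite eqn_mul2r.
have E2 : forall a s : K, s * s = 1 -> s * (a * (s * a)) = a ^+ 2.
  by move=> a s ss; rewrite [a * _]mulrCA [s * (s * _)]mulrA ss mul1r expr2.
have := Hsq h.[0]; rewrite -/N -emN -P_0 -EHP hornerM hN_0 E2 ?sign_sq //.
by rewrite eqxx.
Qed.

End Step.


Lemma prod_pow_const (R : comNzRingType) (rs : seq R) (u : nat) (c : R) :
  all (fun z => z ^+ u == c) rs -> (\prod_(z <- rs) z) ^+ u = c ^+ size rs.
Proof.
elim: rs => [|z s IH]; first by rewrite big_nil expr1n.
by rewrite /= big_cons => /andP [/eqP hz hs]; rewrite exprMn hz IH // exprS.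
Qed.

Lemma CT (u : nat) (B : rat) (g : {poly rat}) : (0 < u)%N -> g \is monic ->
  g %| 'X^u + B%:P -> g.[0] ^+ u = ((-1) ^+ u.+1 * B) ^+ (size g).-1.
Proof.
move=> u0 gm gd.
pose G := map_poly (ratr : rat -> algC) g.
have [rs Grs] := closed_field_poly_normal G.
have Gm : G \is monic by rewrite map_monic.
rewrite (monicP Gm) scale1r in Grs.
have sG : (size g).-1 = size rs.
  by rewrite -(size_map_poly (ratr : {rmorphism rat -> algC}) g) -/G Grs size_prod_XsubC.
apply: (fmorph_inj (ratr : {rmorphism rat -> algC})).
rewrite rmorphXn rmorphXn rmorphM rmorphXn rmorphN rmorph1 -horner_map /= -/G.
rewrite rmorph0 Grs horner_coef0 coef0_prod_XsubC exprMn sG.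
have Hr : all (fun z => z ^+ u == - ratr B) rs.
  apply/allP => z zr; have : root G z by rewrite Grs root_prod_XsubC.
  have gd' : G %| map_poly (ratr : rat -> algC) ('X^u + B%:P) by rewrite dvdp_map.
  move/(root_dvdp gd'); rewrite /root rmorphD /= map_polyXn map_polyC /= hornerD hornerXn hornerC.
  by rewrite addr_eq0.
by rewrite (prod_pow_const Hr) -exprM mulnC exprM -exprMn exprS mulN1r mulNr mulrN.
Qed.


Notation KQ := (rat[i]).

Definition conjK (z : KQ) : KQ := Complex (complex.Re z) (- complex.Im z).

Lemma conjK_additive : additive conjK.
Proof. by move=> [a b] [c d]; rewrite /conjK /= opprD. Qed.

Lemma conjK_multiplicative : multiplicative conjK.
Proof.
split; last by rewrite /conjK /= oppr0.
move=> [a b] [c d]; rewrite /conjK /=.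
by congr Complex; rewrite ?mulrN ?mulNr ?opprK // opprD.
Qed.

HB.instance Definition _ := GRing.isAdditive.Build KQ KQ conjK conjK_additive.
HB.instance Definition _ := GRing.isMultiplicative.Build KQ KQ conjK conjK_multiplicative.

Lemma conjKK : involutive conjK.
Proof. by move=> [a b]; rewrite /conjK /= opprK. Qed.

Definition rc : {rmorphism rat -> KQ} := real_complex rat.

Lemma conjK_rc (a : rat) : conjK (rc a) = rc a.
Proof. by rewrite /conjK /= oppr0. Qed.

Lemma two_neq0_KQ : (2 : KQ) != 0.
Proof. by []. Qed.

Lemma conjK_fix (z : KQ) : conjK z = z -> z = rc (complex.Re z).
Proof.
case: z => a b; rewrite /conjK /= => [[]] h.
have : b = 0.
  have : 2 * b = 0 by rewrite mulr2n mulrDl mul1r -{1}h addNr.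
  by move/eqP; rewrite mulf_eq0 => /orP [//|/eqP].
by move=> ->.
Qed.

Definition conjp (p : {poly KQ}) := map_poly conjK p.

Lemma conjpK (p : {poly KQ}) : conjp (conjp p) = p.
Proof.
by rewrite /conjp -map_poly_comp (eq_map_poly conjKK) map_poly_id.
Qed.

Lemma real_poly (p : {poly KQ}) : conjp p = p -> p = map_poly rc (map_poly (@complex.Re rat) p).
Proof.
move=> hp; apply/polyP => i; rewrite coef_map /= coef_map_id0 //.
apply: conjK_fix; have := congr1 (fun q : {poly KQ} => q`_i) hp.
by rewrite /= /conjp coef_map.
Qed.

Lemma sq_iD (D : nat) (c : KQ) : (0 < D)%N ->
  c ^+ 2 = Complex 0 D%:R \/ c ^+ 2 = Complex 0 (- D%:R) -> exists w : nat, D = (2 * w ^ 2)%N.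
Proof.
move=> D0; case: c => x y; rewrite expr2.
have D0' : (0 : rat) < D%:R by rewrite ltr0n.
move=> h.
have [h1 h2] : x * x - y * y = 0 /\ (x * y + y * x = D%:R \/ x * y + y * x = - D%:R).
  by case: h => -[] a b; split => //; [left|right].
have e : 2 * (x * x) = D%:R.
  have : (x - y) * (x + y) = 0 by rewrite mulrDr !mulrBl [y * x]mulrC addrA subrK.
  move/eqP; rewrite mulf_eq0 => /orP [/eqP hy|/eqP hy].
    have hy' : y = x by apply/eqP; rewrite eq_sym -subr_eq0 hy.
    by move: h1 h2; rewrite hy' => h1 [] h2; nra.
  have hy' : y = - x by apply/eqP; rewrite -addr_eq0 addrC hy.
  by move: h1 h2; rewrite hy' => h1 [] h2; nra.
have e2 : (2 * x) ^+ 2 = ((2 * D)%N%:Z)%:~R.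
  by rewrite -pmulrn natrM -e; ring.
have hz := rat_pow_int (isT : (0 < 2)%N) e2.
set z := numq (2 * x) in hz.
have hz2 : z ^+ 2 = (2 * D)%N%:Z.
  by apply: (@intr_inj rat); rewrite rmorphXn /= -hz e2.
have hn : (`|z| ^ 2 = 2 * D)%N.
  by rewrite -abszX hz2.
have : (2 %| `|z|)%N.
  have : (2 %| `|z| ^ 2)%N by rewrite hn dvdn_mulr.
  by rewrite Euclid_dvdX // => /andP [].
case/dvdnP => w hw; exists w.
move: hn; rewrite hw expnMn => /eqP; rewrite (mulnC 2 D) -[(2 ^ 2)%N]/(2 * 2)%N.
move=> /eqP hh; clear -hh; lia.
Qed.

Definition iD (D : nat) : KQ := Complex 0 D%:R.

Lemma iD_neq0 D : (0 < D)%N -> iD D != 0.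
Proof.
move=> D0; apply/eqP => -[] /eqP; rewrite pnatr_eq0 => /eqP D00.
by move: D0; rewrite D00.
Qed.

Lemma conj_iD D : conjK (iD D) = - iD D.
Proof. by rewrite /conjK /iD /=; congr Complex; rewrite oppr0. Qed.

Lemma iD_sq D : iD D ^+ 2 = - rc ((D ^ 2)%N%:R).
Proof.
rewrite expr2 /iD /= natrX.
by congr Complex; rewrite ?mul0r ?mulr0 ?add0r ?addr0 ?sub0r ?oppr0 // expr2.
Qed.

Lemma prodP1 (M D : nat) :
  ('X^M - (iD D)%:P) * ('X^M + (iD D)%:P) = 'X^(2 * M) + (rc ((D ^ 2)%N%:R))%:P :> {poly KQ}.
Proof.
have -> : rc ((D ^ 2)%N%:R) = - iD D ^+ 2 by rewrite iD_sq opprK.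
by rewrite polyCN rmorphXn mulnC exprM; ring.
Qed.

Lemma conjpP1 (M D : nat) : conjp ('X^M - (iD D)%:P) = 'X^M + (iD D)%:P.
Proof. by rewrite /conjp rmorphB /= map_polyXn map_polyC /= conj_iD polyCN opprK. Qed.

Lemma map_rc_F (n k : nat) :
  map_poly rc ('X^n + (k%:R)%:P) = 'X^n + (rc k%:R)%:P.
Proof. by rewrite rmorphD /= map_polyXn map_polyC. Qed.

Lemma size_conjp (q : {poly KQ}) : size (conjp q) = size q.
Proof. by rewrite /conjp size_map_poly. Qed.

Lemma des1 (u D : nat) : (0 < u)%N -> (0 < D)%N ->
  irreducible_poly ('X^(2 * u) + ((D ^ 2)%N%:R)%:P : {poly rat}) ->
  irreducible_poly ('X^u - (iD D)%:P : {poly KQ}).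
Proof.
move=> u0 D0 Firr.
set P1 := 'X^u - (iD D)%:P.
have sP1 : size P1 = u.+1 by rewrite size_XnsubC.
split; first by rewrite sP1 ltnS.
move=> q q1 qP; apply/negPn/negP => qn.
have P10 : P1 != 0 by rewrite -size_poly_eq0 sP1.
have q0 : q != 0 by apply/eqP => q0; move: qP; rewrite q0 dvd0p (negPf P10).
have sq1 : (1 < size q)%N.
  by move: q1 q0; rewrite -size_poly_eq0; case: (size q) => [|[]].
have squ : (size q < u.+1)%N.
  by rewrite -sP1 ltn_neqAle dvdp_leq // andbT dvdp_size_eqp.
set R := q * conjp q.
have cq0 : conjp q != 0 by rewrite -size_poly_eq0 size_conjp size_poly_eq0.
have RP : R %| map_poly rc ('X^(2 * u) + ((D ^ 2)%N%:R)%:P).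
  rewrite map_rc_F -prodP1 -conjpP1 dvdp_mul // /conjp dvdp_map //.
have Rfix : conjp R = R.
  by rewrite /R /conjp rmorphM /= -/(conjp q) -/(conjp (conjp q)) conjpK mulrC.
have hR := real_poly Rfix.
set R' := map_poly (@complex.Re rat) R in hR.
have R'F : R' %| 'X^(2 * u) + ((D ^ 2)%N%:R)%:P by rewrite -(dvdp_map rc) -hR.
have sR : size R = (size q + size q).-1 by rewrite size_mul // size_conjp.
have sR' : size R' = size R by rewrite [in RHS]hR size_map_poly.
have sF : size ('X^(2 * u) + ((D ^ 2)%N%:R)%:P : {poly rat}) = (2 * u).+1.
  by rewrite size_XnaddC // muln_gt0.
case: (irredp_XsubCP Firr R'F) => /eqp_size; rewrite ?size_poly1 ?sF sR' sR => h;
  clear -h sq1 squ; lia.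
Qed.

Definition toK (w : {poly int}) : {poly KQ} := map_poly rc (map_poly (intr : int -> rat) w).

Lemma toK_size w : size (toK w) = size w.
Proof. by rewrite /toK size_map_poly size_rat_int_poly. Qed.

Lemma toK_mul p q : toK (p * q) = toK p * toK q.
Proof. by rewrite /toK !rmorphM. Qed.

Lemma conjp_toK w : conjp (toK w) = toK w.
Proof.
by rewrite /conjp /toK -map_poly_comp; apply: eq_map_poly => x /=; rewrite conjK_rc.
Qed.

Lemma coprimeP1P2 (M D : nat) : (0 < D)%N ->
  coprimep ('X^M - (iD D)%:P) ('X^M + (iD D)%:P).
Proof.
move=> D0; apply/coprimepP => d d1 d2.
have : d %| ('X^M + (iD D)%:P) - ('X^M - (iD D)%:P) by rewrite dvdp_sub.
rewrite opprB addrC addrA subrK -polyCD => dc.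
have : (iD D + iD D)%:P %= 1 by rewrite polyC_eqp1 -mulr2n -mulr_natr mulf_neq0 ?iD_neq0.
move/eqp_dvdr => e; rewrite e in dc.
by rewrite /eqp dc dvd1p.
Qed.

Lemma des2 (M D : nat) (p q : {poly int}) : (0 < M)%N -> (0 < D)%N ->
  irreducible_poly ('X^M - (iD D)%:P : {poly KQ}) ->
  'X^(2 * M) + ((D ^ 2)%N%:R)%:P = p * q -> (1 < size p)%N -> (1 < size q)%N -> False.
Proof.
move=> M0 D0 Pirr hf sp sq.
set P1 := 'X^M - (iD D)%:P.
have p0 : p != 0 by rewrite -size_poly_eq0; case: (size p) sp.
have q0 : q != 0 by rewrite -size_poly_eq0; case: (size q) sq.
have sf : size (p * q) = (2 * M).+1.
  by rewrite -hf size_XnaddC // muln_gt0.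
have spq : size (p * q) = (size p + size q).-1 by rewrite size_mul.
have fK : toK (p * q) = P1 * ('X^M + (iD D)%:P).
  by rewrite prodP1 -hf /toK rmorphD /= map_polyXn map_polyC /= rmorphD /= map_polyXn map_polyC /= rmorph_nat.
have key : forall w : {poly int}, w != 0 -> P1 %| toK w -> ((2 * M).+1 <= size w)%N.
  move=> w w0 hw.
  have hw2 : 'X^M + (iD D)%:P %| toK w.
    by rewrite -conjpP1 -conjp_toK /conjp dvdp_map.
  have : P1 * ('X^M + (iD D)%:P) %| toK w by rewrite Gauss_dvdp ?hw ?hw2 // coprimeP1P2.
  rewrite -fK => /dvdp_leq; rewrite -size_poly_eq0 toK_size size_poly_eq0 => /(_ w0).
  by rewrite !toK_size sf.
have : P1 %| toK p * toK q by rewrite -toK_mul fK dvdp_mulr.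
have := @irreducible_poly_coprime _ _ (toK p) Pirr.
case: (boolP (P1 %| toK p)) => [hp _ _|_ cop].
  by have := key p p0 hp; rewrite -sf spq; clear -sq; lia.
rewrite Gauss_dvdpr // => hq.
by have := key q q0 hq; rewrite -sf spq; clear -sp; lia.
Qed.

Lemma Q1 (N b u E : nat) : (0 < b)%N -> (0 < u)%N -> propP N b -> (u %| N)%N ->
  coprime u E -> odd u ->
  irreducible_poly ('X^u + ((b ^ E)%N%:R)%:P : {poly rat}).
Proof.
move=> b0 u0 hP uN cuE ou.
set F := 'X^u + _.
have sF : size F = u.+1 by rewrite size_XnaddC.
split; first by rewrite sF ltnS.
move=> q q1 qF.
have F0 : F != 0 by rewrite -size_poly_eq0 sF.
have q0 : q != 0 by apply/eqP => q0; move: qF; rewrite q0 dvd0p (negPf F0).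
have lc0 : lead_coef q != 0 by rewrite lead_coef_eq0.
set g := (lead_coef q)^-1 *: q.
have gm : g \is monic by apply/monicP; rewrite lead_coefZ mulVf.
have gF : g %| F by rewrite dvdpZl // invr_eq0.
have sg : size g = size q by rewrite size_scale // invr_eq0.
have hct := CT u0 gm gF.
have s1 : (-1 : rat) ^+ u.+1 = 1 by rewrite -signr_odd /= ou.
rewrite s1 mul1r -natrX sg in hct.
set m := (size q).-1 in hct.
have hz := rat_pow_int u0 (_ : g.[0] ^+ u = ((b ^ E) ^ m)%N%:Z%:~R) .
have {}hz := hz hct.
set z := numq g.[0] in hz.
have hz2 : z ^+ u = ((b ^ E) ^ m)%N%:Z.
  by apply: (@intr_inj rat); rewrite rmorphXn /= -hz hct.
have hn : (`|z| ^ u = b ^ (E * m))%N by rewrite -abszX hz2 expnM.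
have um := NT1 b0 u0 hP uN cuE hn.
have sq1 : (1 < size q)%N.
  by move: q1 q0; rewrite -size_poly_eq0; case: (size q) => [|[]].
have squ : (size q <= u.+1)%N by rewrite -sF dvdp_leq.
have m0 : (0 < m)%N by rewrite /m -ltnS prednK // ltnW.
have := dvdn_leq m0 um => hum.
have : size q = size F.
  rewrite sF; move: hum squ sq1; rewrite /m; clear; lia.
by move/eqP; rewrite dvdp_size_eqp.
Qed.

Lemma compXn_X2 (R : fieldType) (n : nat) (c : R) :
  ('X^n + c%:P) \Po 'X^2 = 'X^(2 * n) + c%:P.
Proof. by rewrite raddfD /= comp_Xn_poly comp_polyC -exprM. Qed.

Lemma compXnB_X2 (R : fieldType) (n : nat) (c : R) :
  ('X^n - c%:P) \Po 'X^2 = 'X^(2 * n) - c%:P.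
Proof. by rewrite raddfB /= comp_Xn_poly comp_polyC -exprM. Qed.

Lemma Q2 (u D : nat) : (0 < u)%N -> (0 < D)%N -> odd u ->
  irreducible_poly ('X^u + ((D ^ 2)%N%:R)%:P : {poly rat}) ->
  irreducible_poly ('X^(2 * u) + ((D ^ 2)%N%:R)%:P : {poly rat}).
Proof.
move=> u0 D0 ou Firr; rewrite -compXn_X2; apply: step_irr => //.
- by apply: monicXnaddC.
- by rewrite hornerD hornerXn expr0n (gtn_eqF u0) add0r hornerC pnatr_eq0 expn_eq0 negb_and -lt0n D0.
- move=> c; rewrite size_XnaddC //= -signr_odd ou expr1 hornerD hornerXn expr0n (gtn_eqF u0) add0r hornerC.
  apply/eqP => h.
  have h1 : 0 <= c ^+ 2 by apply: sqr_ge0.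
  have h2 : (0 : rat) < (D ^ 2)%N%:R by rewrite ltr0n expn_gt0 D0.
  move: h; rewrite mulN1r => h; rewrite h in h1; lra.
Qed.

Lemma nosq_of (D : nat) : (0 < D)%N -> (forall w, D <> (2 * w ^ 2)%N) ->
  forall c : KQ, c ^+ 2 != iD D /\ c ^+ 2 != - iD D.
Proof.
move=> D0 hD c; split; apply/eqP => h.
  by have [w hw] := sq_iD D0 (or_introl h); apply: (hD w).
have e : - iD D = Complex 0 (- D%:R) by rewrite /iD /=; congr Complex; rewrite oppr0.
by have [w hw] := sq_iD D0 (or_intror (etrans h e)); apply: (hD w).
Qed.

Lemma chainK (u D k : nat) : (0 < u)%N -> (0 < D)%N ->
  irreducible_poly ('X^u - (iD D)%:P : {poly KQ}) ->
  ((0 < k)%N -> forall c : KQ, c ^+ 2 != iD D /\ c ^+ 2 != - iD D) ->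
  irreducible_poly ('X^(2 ^ k * u) - (iD D)%:P : {poly KQ}).
Proof.
move=> u0 D0 h0; elim: k => [|k IH] hs; first by rewrite expn0 mul1n.
have hs' : forall c : KQ, c ^+ 2 != iD D /\ c ^+ 2 != - iD D by apply: hs.
have n0 : (0 < 2 ^ k * u)%N by rewrite muln_gt0 expn_gt0 u0.
rewrite expnS -mulnA -compXnB_X2; apply: step_irr.
- exact: two_neq0_KQ.
- exact: monicXnsubC.
- by apply: IH => k0; apply: hs.
- by rewrite hornerD hornerXn expr0n (gtn_eqF n0) add0r hornerN hornerC oppr_eq0 iD_neq0.
- move=> c; rewrite size_XnsubC //= hornerD hornerXn expr0n (gtn_eqF n0) add0r hornerN hornerC.
  rewrite -signr_odd; case: (odd _); rewrite ?expr1 ?expr0 ?mulN1r ?mul1r ?opprK;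
  by case: (hs' c).
Qed.

Lemma D_form (b r w : nat) : (0 < b)%N -> (0 < r)%N ->
  (b ^ (2 ^ r.-1) = 2 * w ^ 2)%N -> r = 1%N /\ b = (2 * w ^ 2)%N.
Proof.
move=> b0 r0 h.
case: r r0 h => [//|[|r]] _ h; first by rewrite expn0 expn1 in h.
exfalso.
have w0 : (0 < w)%N.
  rewrite lt0n; apply/eqP => w0; move: h; rewrite w0 exp0n // muln0 => /eqP.
  by rewrite expn_eq0 (gtn_eqF b0).
move: h; rewrite /= expnS (mulnC 2) expnM => h.
have := congr1 (logn 2) h; rewrite lognX lognM // ?expn_gt0 ?w0 // !lognX.
rewrite (logn_prime 2 (isT : prime 2)) eqxx => e.
have : odd (2 * (2 ^ r * logn 2 b)) = odd (1 + 2 * logn 2 w) by exact: (congr1 odd e).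
by rewrite oddD !oddM.
Qed.

Lemma two_adic (t : nat) : (0 < t)%N -> exists a u, t = (2 ^ a * u)%N /\ odd u.
Proof.
have [n] := ubnP t; elim: n t => [|n IH] t; first by rewrite ltn0.
move=> tn t0; case ot: (odd t); first by exists 0%N, t; rewrite expn0 mul1n.
have e : t = (2 * t./2)%N by rewrite -{1}(odd_double_half t) ot add0n -mul2n.
have h0 : (0 < t./2)%N by move: t0; rewrite e; clear; lia.
have hn : (t./2 < n)%N by move: tn t0; rewrite {1 2}e; clear; lia.
have [a [u [hu ou]]] := IH t./2 hn h0.
by exists a.+1, u; rewrite e hu expnS mulnA.
Qed.

Definition pf (s d : nat) (e : int) : {poly int} :=
  'X^(2 * s) + e%:P * 'X^s + ((2 * d ^ 2)%N%:R)%:P.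

Lemma c2s (s d : nat) (e : int) : (0 < s)%N -> (pf s d e)`_(2 * s) = 1.
Proof.
move=> s0; rewrite /pf !coefD coefXn eqxx coefCM coefXn coefC.
have h1 : ((2 * s)%N == s) = false.
  by apply/negbTE; rewrite -{2}(mul1n s) eqn_mul2r negb_or -lt0n s0.
have h2 : ((2 * s)%N == 0%N) = false.
  by apply/negbTE; rewrite muln_eq0 negb_or /= -lt0n s0.
by rewrite h1 h2 mulr0 addr0 addr0.
Qed.

Lemma sz (s d : nat) (e : int) : (0 < s)%N -> (1 < size (pf s d e))%N.
Proof.
move=> s0; have := c2s d e s0.
case: (leqP (size (pf s d e)) 1%N) => // hs.
rewrite nth_default //; last by apply: leq_trans hs _; rewrite -{1}(muln1 1%N) leq_mul.
Qed.

Lemma factor_dir (s d : nat) : (0 < s)%N ->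
  reducible_Z ('X^(2 ^ 1 * (2 * s)) + (((2 * d ^ 2) ^ (2 ^ 1))%N%:R)%:P).
Proof.
move=> s0.
exists (pf s d (2 * d)%N%:R), (pf s d (- (2 * d)%N%:R)).
split; [exact: sz | exact: sz |].
have cst : forall k : nat, ((k%:R : int)%:P : {poly int}) = k%:R by move=> k; rewrite rmorph_nat.
rewrite /pf polyCN !cst.
have E : ((2 * d ^ 2) ^ 2 ^ 1 = 4 * d ^ 4)%N by rewrite expn1 expnMn -expnM.
rewrite E !natrM.
have -> : ('X^(2 ^ 1 * (2 * s)) : {poly int}) = ('X^s) ^+ 4.
  by rewrite -exprM; congr (_ ^+ _); rewrite expn1 mulnA mulnC.
have -> : ('X^(2 * s) : {poly int}) = ('X^s) ^+ 2 by rewrite -exprM mulnC.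
ring.
Qed.


Theorem lemma6 (t r b : nat) :
  (0 < t)%N -> (0 < r)%N -> (0 < b)%N -> propP (2 ^ r * t) b ->
  (reducible_Z ('X^(2 ^ r * t) + ((b ^ (2 ^ r))%N)%:R%:P)
   <-> [/\ ~~ odd t, r = 1%N & exists d : nat, (0 < d)%N /\ b = (2 * d ^ 2)%N]).
Proof.
move=> t0 r0 b0 hP; split; last first.
  case=> et -> [d [d0 ->]].
  have ht : t = (2 * t./2)%N by rewrite -{1}(odd_double_half t) (negPf et) add0n -mul2n.
  have t20 : (0 < t./2)%N by move: t0; rewrite ht; clear; lia.
  by rewrite ht; apply: factor_dir.
case=> p [q [sp sq hf]].
have [a [u [tu ou]]] := two_adic t0.
have u0 : (0 < u)%N by move: t0; rewrite tu muln_gt0 => /andP [].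
set D := (b ^ (2 ^ r.-1))%N.
have D0 : (0 < D)%N by rewrite /D expn_gt0 b0.
have BD : (b ^ (2 ^ r) = D ^ 2)%N by rewrite /D -expnM mulnC -expnS prednK.
have uN : (u %| 2 ^ r * t)%N by rewrite tu dvdn_mull // dvdn_mull.
have cu : coprime u (2 ^ r) by rewrite coprimeXr // coprimen2.
have hQ1 := Q1 b0 u0 hP uN cu ou.
rewrite BD in hQ1.
have hQ2 := Q2 u0 D0 ou hQ1.
have hK0 := des1 u0 D0 hQ2.
have nM : (2 ^ r * t = 2 * (2 ^ (r + a).-1 * u))%N.
  have e : (r + a = ((r + a).-1).+1)%N by rewrite prednK // addn_gt0 r0.
  by rewrite tu mulnA -expnD {1}e expnS mulnA.
rewrite BD nM in hf.
have M0 : (0 < 2 ^ (r + a).-1 * u)%N by rewrite muln_gt0 expn_gt0 u0.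
have irrK : ((0 < (r + a).-1)%N -> forall c : KQ, c ^+ 2 != iD D /\ c ^+ 2 != - iD D) -> False.
  move=> hs; have hirr := @chainK u D ((r + a).-1) u0 D0 hK0 hs.
  exact: (des2 M0 D0 hirr hf sp sq).
case: (classic (exists w, D = (2 * w ^ 2)%N)) => [[w hw]|nw]; last first.
  exfalso; apply: irrK => _; apply: nosq_of => // w hw; apply: nw; by exists w.
have [r1 bw] := D_form b0 r0 hw.
split => //.
- apply/negP => ot; apply: irrK => h; exfalso.
  case: a tu h {nM hf M0} => [|a] tu h.
    by move: h; rewrite r1.
  by move: ot; rewrite tu expnS -mulnA oddM.
- exists w; split => //; rewrite lt0n; apply/eqP => w0; move: b0; rewrite bw w0.
  by rewrite exp0n.
Qed.
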